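(* Let $P$ be a definite program, $M_0$ the ``vanilla'' meta-interpreter and $Q\in B^E_P$ an atomic query. Then: (1) for every $A\in \mathrm{Call}(P,Q)$ there exists $\mathit{solve}(A')\in \mathrm{Call}(M_0\cup \mathit{ce}(P),\mathit{solve}(Q))$ such that $A$ and $A'$ are variants; (2) for every $\mathit{solve}(A)\in \mathrm{Call}(M_0\cup \mathit{ce}(P),\mathit{solve}(Q))$ with $A\in B^E_P$ there exists $A'\in\mathrm{Call}(P,Q)$ such that $A$ and $A'$ are variants.
   Context: Logic programs are definite; a query is a finite sequence of atoms; derivations use the leftmost selection rule (LD-derivations; the LD-tree of $P\cup\{Q\}$ is the SLD-tree under Prolog's left-to-right selection rule). $B^E_P$ (the extended Herbrand base) is the set of atoms of the language of $P$ taken modulo variance. For a program $P$ and a set of queries $S$, the call set $\mathrm{Call}(P,S)$ is the set of atoms $A$ such that a variant of $A$ is a selected atom in some branch of the LD-tree of $P\cup\{Q\}$ for some $Q\in S$; $\mathrm{Call}(P,Q)=\mathrm{Call}(P,\{Q\})$. Clause encoding: a clause body $B_1,\dots,B_n$ ($n\ge1$) is represented as the term $(B_1,(B_2,\dots,B_n))$ built with a binary functor $,/2$ (for $n=1$ just $B_1$), and an empty body by the constant $\mathit{true}$. The clause-encoding $\mathit{ce}(P)$ is the set of facts $\mathit{clause}(H,B)$, one for each clause $H\leftarrow B$ of $P$. The symbols $,/2$, $\mathit{clause}$, $\mathit{solve}$ do not occur in the language of $P$. The ``vanilla'' meta-interpreter $M_0$ is the program $\mathit{solve}(\mathit{true}).$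 $\mathit{solve}((A,B))\leftarrow \mathit{solve}(A),\mathit{solve}(B).$ $\mathit{solve}(H)\leftarrow \mathit{clause}(H,B),\mathit{solve}(B).$ *)

(* Defs.v *)
From Stdlib Require Import List Bool Relations.
Import ListNotations.

(* Prolog-style: a functor is a name plus the
   number of arguments it is applied to.  [Comma], [ClauseS], [SolveS],
   [TrueS] are the names used by the meta-interpreter / clause encoding;
   [Usr n] are all the other names. *)
Inductive sym : Type := Comma | ClauseS | SolveS | TrueS | Usr (n : nat).

Inductive term : Type :=
| Var (x : nat)
| Fn (f : sym) (args : list term).

Definition is_atom (t : term) : Prop :=
  match t with Var _ => False | Fn _ _ => True end.

Definition substitution := nat -> term.

Fixpoint subst (s : substitution) (t : term) : term :=
  match t with
  | Var x => s x
  | Fn f l => Fn f (map (subst s) l)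
  end.

Fixpoint vars (t : term) : list nat :=
  match t with
  | Var x => [x]
  | Fn _ l => flat_map vars l
  end.

Definition variant (a b : term) : Prop :=
  exists s r : substitution, subst s a = b /\ subst r b = a.

Definition is_mgu (th : substitution) (a b : term) : Prop :=
  subst th a = subst th b /\
  forall s : substitution, subst s a = subst s b ->
    exists eta : substitution, forall x, s x = subst eta (th x).

Record clause : Type := mkClause { head : term; body : list term }.
Definition program := list clause.

Definition subst_cl (s : substitution) (c : clause) : clause :=
  mkClause (subst s (head c)) (map (subst s) (body c)).

Definition cl_vars (c : clause) : list nat :=
  vars (head c) ++ flat_map vars (body c).

Definition cl_variant (c c' : clause) : Prop :=
  exists s r : substitution, subst_cl s c = c' /\ subst_cl r c' = c.

Inductive ld_step (P : program) : list term -> list term -> Prop :=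
| ld_step_intro : forall (A : term) (G : list term) (c c' : clause)
    (th : substitution),
    In c P ->
    cl_variant c c' ->
    (forall x, In x (cl_vars c') -> ~ In x (flat_map vars (A :: G))) ->
    is_mgu th A (head c') ->
    ld_step P (A :: G) (map (subst th) (body c' ++ G)).

Definition ld_reach (P : program) (Q R : list term) : Prop :=
  clos_refl_trans_1n (list term) (ld_step P) Q R.

Definition Call (P : program) (Q : term) (A : term) : Prop :=
  exists A' G, ld_reach P [Q] (A' :: G) /\ variant A A'.

(* The language of P: the symbols ,/2, clause, solve (any arity) and the
   constant true (used to encode empty bodies) do not occur in it. *)
Definition reservedb (f : sym) (n : nat) : bool :=
  match f with
  | Comma => Nat.eqb n 2
  | ClauseS => true
  | SolveS => true
  | TrueS => Nat.eqb n 0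
  | Usr _ => false
  end.

Fixpoint in_lang (t : term) : bool :=
  match t with
  | Var _ => true
  | Fn f l => negb (reservedb f (length l)) && forallb in_lang l
  end.

(* A in B^E_P: an atom of the language of P (B^E_P is taken modulo variance,
   and the statement below is invariant under variance). *)
Definition in_BE (A : term) : Prop := is_atom A /\ in_lang A = true.

Definition definite_program (P : program) : Prop :=
  forall c, In c P -> in_BE (head c) /\ forall b, In b (body c) -> in_BE b.

Definition trueT : term := Fn TrueS [].
Definition conjT (a b : term) : term := Fn Comma [a; b].
Definition solveT (a : term) : term := Fn SolveS [a].
Definition clauseT (h b : term) : term := Fn ClauseS [h; b].

Fixpoint enc_body (l : list term) : term :=
  match l with
  | [] => trueT
  | [b] => b
  | b :: bs => conjT b (enc_body bs)
  end.

Definition ce (P : program) : program :=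
  map (fun c => mkClause (clauseT (head c) (enc_body (body c))) []) P.

Definition M0 : program :=
  [ mkClause (solveT trueT) [];
    mkClause (solveT (conjT (Var 0) (Var 1))) [solveT (Var 0); solveT (Var 1)];
    mkClause (solveT (Var 0)) [clauseT (Var 0) (Var 1); solveT (Var 1)] ].

(* Main.v *)
Require Import Defs.
From Stdlib Require Import List Bool Relations Lia PeanoNat.
Import ListNotations.


Fixpoint term_ind2 (Pr : term -> Prop) (HV : forall x, Pr (Var x))
  (HF : forall f l, Forall Pr l -> Pr (Fn f l)) (t : term) : Pr t :=
  match t with
  | Var x => HV x
  | Fn f l => HF f l ((fix go (l : list term) : Forall Pr l :=
                        match l with
                        | [] => Forall_nil _
                        | t :: l => Forall_cons _ (term_ind2 Pr HV HF t) (go l)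
                        end) l)
  end.

Lemma subst_comp s1 s2 t :
  subst s2 (subst s1 t) = subst (fun x => subst s2 (s1 x)) t.
Proof.
  induction t using term_ind2; simpl; auto. f_equal. rewrite map_map.
  induction H; simpl; f_equal; auto.
Qed.

Lemma map_subst_comp s1 s2 l :
  map (subst s2) (map (subst s1) l) = map (subst (fun x => subst s2 (s1 x))) l.
Proof. rewrite map_map. apply map_ext. intros; apply subst_comp. Qed.

Lemma subst_ext s1 s2 t :
  (forall x, In x (vars t) -> s1 x = s2 x) -> subst s1 t = subst s2 t.
Proof.
  induction t using term_ind2; simpl; intros Hx.
  - apply Hx; auto.
  - f_equal. induction H; simpl in *; auto. f_equal.
    + apply H. intros; apply Hx, in_or_app; auto.
    + apply IHForall. intros; apply Hx, in_or_app; auto.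
Qed.

Lemma map_subst_ext s1 s2 l :
  (forall x, In x (flat_map vars l) -> s1 x = s2 x) -> map (subst s1) l = map (subst s2) l.
Proof.
  induction l; simpl; intros; auto. f_equal.
  apply subst_ext; intros; apply H, in_or_app; auto.
  apply IHl; intros; apply H, in_or_app; auto.
Qed.

Lemma subst_var t : subst Var t = t.
Proof.
  induction t using term_ind2; simpl; auto. f_equal.
  induction H; simpl; f_equal; auto.
Qed.

Lemma map_subst_var l : map (subst Var) l = l.
Proof. induction l; simpl; f_equal; auto using subst_var. Qed.

Lemma vars_subst_in s t y :
  In y (vars (subst s t)) -> exists x, In x (vars t) /\ In y (vars (s x)).
Proof.
  induction t using term_ind2; simpl; intros Hy.
  - exists x; auto.
  - induction H; simpl in *. contradiction.
    apply in_app_or in Hy as [Hy|Hy].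
    + destruct (H Hy) as [z [? ?]]. exists z; split; auto. apply in_or_app; auto.
    + destruct (IHForall Hy) as [z [? ?]]. exists z; split; auto. apply in_or_app; auto.
Qed.

Lemma vars_subst_in2 s t x y :
  In x (vars t) -> In y (vars (s x)) -> In y (vars (subst s t)).
Proof.
  induction t using term_ind2; simpl; intros Hx Hy.
  - destruct Hx as [->|[]]; auto.
  - induction H; simpl in *. contradiction.
    apply in_app_or in Hx as [Hx|Hx]; apply in_or_app; auto.
Qed.

Lemma fm_vars_subst_in s l y :
  In y (flat_map vars (map (subst s) l)) -> exists x, In x (flat_map vars l) /\ In y (vars (s x)).
Proof.
  induction l; simpl; intros Hy. contradiction.
  apply in_app_or in Hy as [Hy|Hy].
  - destruct (vars_subst_in _ _ _ Hy) as [z [? ?]]. exists z; split; auto. apply in_or_app; auto.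
  - destruct (IHl Hy) as [z [? ?]]. exists z; split; auto. apply in_or_app; auto.
Qed.

Lemma fm_vars_subst_in2 s l x y :
  In x (flat_map vars l) -> In y (vars (s x)) -> In y (flat_map vars (map (subst s) l)).
Proof.
  induction l; simpl; intros Hx Hy. contradiction.
  apply in_app_or in Hx as [Hx|Hx]; apply in_or_app; eauto using vars_subst_in2.
Qed.

Lemma subst_fix s t : subst s t = t -> forall x, In x (vars t) -> s x = Var x.
Proof.
  induction t using term_ind2; simpl; intros E y Hy.
  - destruct Hy as [->|[]]; auto.
  - injection E as E. induction H; simpl in *. contradiction.
    injection E as E1 E2. apply in_app_or in Hy as [Hy|Hy]; auto.
Qed.

Lemma map_subst_fix s l : map (subst s) l = l -> forall x, In x (flat_map vars l) -> s x = Var x.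
Proof.
  induction l; simpl; intros E y Hy. contradiction.
  injection E as E1 E2. apply in_app_or in Hy as [Hy|Hy]; eauto using subst_fix.
Qed.

Lemma enc_subst s L : subst s (enc_body L) = enc_body (map (subst s) L).
Proof.
  induction L as [|a L IH]; auto.
  destruct L as [|b L]; auto.
  change (enc_body (a :: b :: L)) with (conjT a (enc_body (b :: L))).
  change (map (subst s) (a :: b :: L)) with (subst s a :: map (subst s) (b :: L)).
  destruct (map (subst s) (b :: L)) eqn:E. discriminate.
  change (enc_body (subst s a :: t :: l)) with (conjT (subst s a) (enc_body (t :: l))).
  rewrite <- IH. reflexivity.
Qed.

Lemma vars_enc L x : In x (vars (enc_body L)) <-> In x (flat_map vars L).
Proof.
  induction L as [|a L IH]; simpl. tauto.
  destruct L as [|b L].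
  - simpl. rewrite app_nil_r. tauto.
  - change (enc_body (a :: b :: L)) with (conjT a (enc_body (b :: L))).
    simpl vars. rewrite app_nil_r. rewrite !in_app_iff. rewrite IH. simpl. rewrite in_app_iff. tauto.
Qed.

Definition maxl (l : list nat) := fold_right Nat.max 0 l.
Lemma in_le_max x l : In x l -> x <= maxl l.
Proof. induction l; simpl; intros H. contradiction. destruct H; subst; lia || (apply IHl in H; lia). Qed.


Definition ren (p : nat -> nat) : substitution := fun x => Var (p x).
Definition lvar (G1 G2 : list term) :=
  exists s r, map (subst s) G1 = G2 /\ map (subst r) G2 = G1.

Lemma subst_cl_comp s1 s2 c :
  subst_cl s2 (subst_cl s1 c) = subst_cl (fun x => subst s2 (s1 x)) c.
Proof. unfold subst_cl; simpl. rewrite subst_comp, map_subst_comp. reflexivity. Qed.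

Lemma subst_ren_inv p q t : (forall x, q (p x) = x) ->
  subst (ren q) (subst (ren p) t) = t.
Proof. intros H. rewrite subst_comp. unfold ren; simpl. rewrite <- (subst_var t) at 2.
  apply subst_ext. intros; rewrite H; auto. Qed.

Lemma perm_step P p q G G' : (forall x, q (p x) = x) -> (forall x, p (q x) = x) ->
  ld_step P G G' -> ld_step P (map (subst (ren p)) G) (map (subst (ren p)) G').
Proof.
  intros Hqp Hpq H. destruct H as [A G c c' th Hin [s [r [E1 E2]]] Hfresh Hmgu].
  set (th' := fun x => subst (ren p) (th (q x))).
  assert (Hres : map (subst (ren p)) (map (subst th) (body c' ++ G)) =
                 map (subst th') (body (subst_cl (ren p) c') ++ map (subst (ren p)) G)).
  { unfold subst_cl; simpl. rewrite <- map_app. rewrite !map_subst_comp. apply map_ext. intros t.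
    apply subst_ext. intros x _. unfold th', ren; simpl. rewrite Hqp. reflexivity. }
  rewrite Hres. change (map (subst (ren p)) (A :: G)) with (subst (ren p) A :: map (subst (ren p)) G).
  apply (ld_step_intro P (subst (ren p) A) (map (subst (ren p)) G) c (subst_cl (ren p) c') th'); auto.
  - exists (fun x => subst (ren p) (s x)), (fun x => subst r (ren q x)). split.
    + rewrite <- E1. rewrite subst_cl_comp. reflexivity.
    + rewrite <- E2. rewrite subst_cl_comp. destruct c' as [h b]; unfold subst_cl; simpl.
      f_equal. apply subst_ext; intros; unfold ren; simpl; rewrite Hqp; auto.
      apply map_subst_ext; intros; unfold ren; simpl; rewrite Hqp; auto.
  - intros x Hx Hx'. unfold cl_vars in Hx. destruct c' as [h b]. unfold subst_cl in Hx; simpl in Hx.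
    assert (Hv : forall y t, In y (vars (subst (ren p) t)) -> exists z, In z (vars t) /\ y = p z).
    { intros y t Hy. destruct (vars_subst_in _ _ _ Hy) as [z [Hz Hz']]. unfold ren in Hz'; simpl in Hz'.
      destruct Hz' as [<-|[]]. eauto. }
    assert (Hvl : forall y l, In y (flat_map vars (map (subst (ren p)) l)) -> exists z, In z (flat_map vars l) /\ y = p z).
    { intros y l Hy. destruct (fm_vars_subst_in _ _ _ Hy) as [z [Hz Hz']]. unfold ren in Hz'; simpl in Hz'.
      destruct Hz' as [<-|[]]. eauto. }
    assert (exists z, In z (cl_vars (mkClause h b)) /\ x = p z) as [z [Hz ->]].
    { unfold cl_vars; simpl. apply in_app_or in Hx as [Hx|Hx].
      - destruct (Hv _ _ Hx) as [z [? ?]]; exists z; split; auto; apply in_or_app; auto.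
      - destruct (Hvl _ _ Hx) as [z [? ?]]; exists z; split; auto; apply in_or_app; auto. }
    change (subst (ren p) A :: map (subst (ren p)) G) with (map (subst (ren p)) (A :: G)) in Hx'.
    destruct (Hvl _ _ Hx') as [w [Hw Ew]].
    assert (z = w) by (rewrite <- (Hqp z), <- (Hqp w); congruence). subst w.
    eapply Hfresh; eauto.
  - destruct Hmgu as [Hu Hg]. split.
    + destruct c' as [h b]; unfold subst_cl; simpl in *. rewrite !subst_comp.
      transitivity (subst (ren p) (subst th A)).
      * rewrite subst_comp. apply subst_ext; intros; unfold th', ren; simpl; rewrite Hqp; auto.
      * rewrite Hu. rewrite subst_comp. apply subst_ext; intros; unfold th', ren; simpl; rewrite Hqp; auto.
    + intros u Eu. destruct c' as [h b]; unfold subst_cl in *; simpl in *.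
      rewrite !subst_comp in Eu.
      destruct (Hg (fun x => u (p x)) Eu) as [eta Heta].
      exists (fun y => eta (q y)). intros x. unfold th'. rewrite subst_comp.
      rewrite <- (Hpq x) at 1. rewrite Heta. apply subst_ext. intros; unfold ren; simpl. rewrite Hqp; auto.
Qed.


Definition swap (a b z : nat) := if z =? a then b else if z =? b then a else z.
Lemma swap_inv a b z : swap a b (swap a b z) = z.
Proof. unfold swap. destruct (Nat.eqb_spec z a).
 - destruct (Nat.eqb_spec b a); subst; auto. rewrite Nat.eqb_refl. auto.
 - destruct (Nat.eqb_spec z b).
   + rewrite Nat.eqb_refl. subst; auto.
   + apply Nat.eqb_neq in n, n0. rewrite n, n0. auto.
Qed.

Lemma perm_ext (D : list nat) (f : nat -> nat) :
  (forall x y, In x D -> In y D -> f x = f y -> x = y) ->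
  exists p q, (forall x, q (p x) = x) /\ (forall x, p (q x) = x) /\ (forall x, In x D -> p x = f x).
Proof.
  induction D as [|x D IH]; intros Hinj.
  - exists (fun z => z), (fun z => z). repeat split; simpl; tauto.
  - destruct IH as [p [q [H1 [H2 H3]]]].
    { intros; apply Hinj; simpl; auto. }
    destruct (in_dec Nat.eq_dec x D).
    + exists p, q. repeat split; auto. intros z [<-|?]; auto.
    + exists (fun z => swap (f x) (p x) (p z)), (fun z => q (swap (f x) (p x) z)).
      repeat split.
      * intros z. rewrite swap_inv; auto.
      * intros z. rewrite H2, swap_inv; auto.
      * intros z [<-|Hz].
        -- unfold swap. rewrite Nat.eqb_refl. destruct (Nat.eqb_spec (p x) (f x)); auto.
        -- rewrite (H3 z Hz). unfold swap.
           destruct (Nat.eqb_spec (f z) (f x)).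
           ++ exfalso. assert (z = x) by (apply Hinj; simpl; auto). subst; contradiction.
           ++ destruct (Nat.eqb_spec (f z) (p x)); auto.
              exfalso. rewrite <- H3 in e by auto. assert (z = x) by (rewrite <- (H1 z), <- (H1 x); congruence).
              subst; contradiction.
Qed.

Lemma lvar_perm G1 G2 : lvar G1 G2 ->
  exists p q, (forall x, q (p x) = x) /\ (forall x, p (q x) = x) /\ map (subst (ren p)) G1 = G2.
Proof.
  intros [s [r [E1 E2]]].
  assert (Hc : forall x, In x (flat_map vars G1) -> subst r (s x) = Var x).
  { intros x Hx. rewrite <- E1 in E2. rewrite map_subst_comp in E2. eapply map_subst_fix in E2; eauto. }
  set (f := fun x => match s x with Var y => y | _ => 0 end).
  assert (Hf : forall x, In x (flat_map vars G1) -> s x = Var (f x)).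
  { intros x Hx. specialize (Hc x Hx). unfold f. destruct (s x); simpl in *; auto. discriminate. }
  destruct (perm_ext (flat_map vars G1) f) as [p [q [H1 [H2 H3]]]].
  { intros x y Hx Hy E. pose proof (Hc x Hx) as Cx. pose proof (Hc y Hy) as Cy.
    rewrite Hf in Cx, Cy by auto. rewrite E in Cx. simpl in *. congruence. }
  exists p, q. repeat split; auto. rewrite <- E1. apply map_subst_ext.
  intros x Hx. unfold ren. rewrite H3, Hf; auto.
Qed.

Lemma lvar_refl G : lvar G G.
Proof. exists Var, Var. rewrite map_subst_var; auto. Qed.
Lemma lvar_sym G1 G2 : lvar G1 G2 -> lvar G2 G1.
Proof. intros [s [r [? ?]]]; exists r, s; auto. Qed.
Lemma lvar_trans G1 G2 G3 : lvar G1 G2 -> lvar G2 G3 -> lvar G1 G3.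
Proof. intros [s [r [E1 E2]]] [s' [r' [E3 E4]]].
  exists (fun x => subst s' (s x)), (fun x => subst r (r' x)).
  rewrite <- !map_subst_comp. subst. split; [reflexivity|]. rewrite E4; auto. Qed.

Lemma reach_app P X Y Z : ld_reach P X Y -> ld_step P Y Z -> ld_reach P X Z.
Proof.
  unfold ld_reach. intros H; induction H; intros.
  - econstructor; eauto. constructor.
  - econstructor; eauto.
Qed.

Definition PR P Q G := exists G0, ld_reach P [Q] G0 /\ lvar G G0.

Lemma PR_var P Q G G' : PR P Q G -> lvar G G' -> PR P Q G'.
Proof. intros [G0 [? ?]] ?. exists G0; split; auto. eapply lvar_trans; eauto using lvar_sym. Qed.

Lemma PR_step P Q G G' : PR P Q G -> ld_step P G G' -> PR P Q G'.
Proof.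
  intros [G0 [HR HV]] Hs. destruct (lvar_perm _ _ HV) as [p [q [H1 [H2 E]]]].
  exists (map (subst (ren p)) G'). split.
  - eapply reach_app; eauto. subst G0. apply perm_step with q; auto.
  - exists (ren p), (ren q). split; auto. rewrite map_subst_comp. rewrite <- (map_subst_var G') at 2.
    apply map_subst_ext. intros; unfold ren; simpl; rewrite H1; auto.
Qed.


Definition solvEnc (L : list term) := solveT (enc_body L).
Definition upd (s : substitution) (x : nat) (t : term) : substitution :=
  fun y => if y =? x then t else s y.
Lemma upd_eq s x t : upd s x t x = t.
Proof. unfold upd; rewrite Nat.eqb_refl; auto. Qed.
Lemma upd_neq s x t y : y <> x -> upd s x t y = s y.
Proof. unfold upd; intros H; apply Nat.eqb_neq in H; rewrite H; auto. Qed.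

Lemma fresh_lt G x : In x (flat_map vars G) -> x < S (maxl (flat_map vars G)).
Proof. intros H; apply in_le_max in H; lia. Qed.

Lemma subst_upd_notin s x t u : ~ In x (vars u) -> subst (upd s x t) u = subst s u.
Proof. intros H; apply subst_ext; intros y Hy; apply upd_neq; congruence. Qed.
Lemma map_subst_upd_notin s x t l : ~ In x (flat_map vars l) -> map (subst (upd s x t)) l = map (subst s) l.
Proof. intros H; apply map_subst_ext; intros y Hy; apply upd_neq; congruence. Qed.

Lemma vars_solvEnc Ls x : In x (flat_map vars (map solvEnc Ls)) <-> In x (flat_map vars (concat Ls)).
Proof.
  induction Ls; simpl. tauto. rewrite !in_app_iff, IHLs. unfold solvEnc, solveT; simpl.
  rewrite ?app_nil_r, vars_enc, flat_map_app, in_app_iff. tauto.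
Qed.

Lemma map_solvEnc s Ls : map (subst s) (map solvEnc Ls) = map solvEnc (map (map (subst s)) Ls).
Proof. induction Ls; simpl; auto. f_equal; auto. unfold solvEnc, solveT; simpl. rewrite enc_subst; auto. Qed.

Lemma concat_map_map s Ls : concat (map (map (subst s)) Ls) = map (subst s) (concat Ls).
Proof. induction Ls; simpl; auto. rewrite map_app; f_equal; auto. Qed.


Definition cl1 := mkClause (solveT trueT) [].
Definition cl2 := mkClause (solveT (conjT (Var 0) (Var 1))) [solveT (Var 0); solveT (Var 1)].
Definition cl3 := mkClause (solveT (Var 0)) [clauseT (Var 0) (Var 1); solveT (Var 1)].
Lemma in1 P : In cl1 (M0 ++ ce P). Proof. apply in_or_app; left; simpl; auto. Qed.
Lemma in2 P : In cl2 (M0 ++ ce P). Proof. apply in_or_app; left; simpl; auto. Qed.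
Lemma in3 P : In cl3 (M0 ++ ce P). Proof. apply in_or_app; left; simpl; auto. Qed.

Lemma step_true P R : ld_step (M0 ++ ce P) (solveT trueT :: R) R.
Proof.
  rewrite <- (map_subst_var R) at 2. change R with ([] ++ R) at 2.
  apply (ld_step_intro (M0 ++ ce P) _ _ cl1 cl1 Var (in1 P)).
  - exists Var, Var; split; reflexivity.
  - intros x H; simpl in H; contradiction.
  - split; auto. intros u _. exists u. intros; reflexivity.
Qed.

Lemma step_conj P a e R : ld_step (M0 ++ ce P) (solveT (conjT a e) :: R) (solveT a :: solveT e :: R).
Proof.
  set (G := solveT (conjT a e) :: R).
  set (N := S (maxl (flat_map vars G))).
  assert (HN : forall x, In x (flat_map vars G) -> x < N) by (intros; apply fresh_lt; auto).
  clearbody N.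
  set (c' := mkClause (solveT (conjT (Var (N+0)) (Var (N+1)))) [solveT (Var (N+0)); solveT (Var (N+1))]).
  set (th := upd (upd Var (N+1) e) (N+0) a).
  assert (Hth : forall t, (forall x, In x (vars t) -> x < N) -> subst th t = t).
  { intros t Ht. rewrite <- (subst_var t) at 2. apply subst_ext. intros x Hx. specialize (Ht x Hx).
    unfold th. rewrite !upd_neq by lia. auto. }
  assert (Hth0 : th (N+0) = a) by (unfold th; apply upd_eq).
  assert (Hth1 : th (N+1) = e) by (unfold th; rewrite upd_neq by lia; apply upd_eq).
  assert (E : solveT a :: solveT e :: R = map (subst th) (body c' ++ R)).
  { simpl. rewrite Hth0, Hth1. f_equal. f_equal. rewrite <- (map_subst_var R) at 1.
    apply map_subst_ext. intros x Hx. assert (x < N) by (apply HN; simpl; rewrite !in_app_iff; auto).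
    unfold th; rewrite !upd_neq by lia; auto. }
  rewrite E. apply (ld_step_intro (M0 ++ ce P) _ _ cl2 c' th (in2 P)).
  - exists (fun x => Var (N + x)), (fun x => Var (x - N)). split; [reflexivity|].
    unfold subst_cl, c', cl2; simpl. replace (N+0-N) with 0 by lia. replace (N+1-N) with 1 by lia. reflexivity.
  - intros x Hx Hx'. apply HN in Hx'. unfold c', cl_vars in Hx; simpl in Hx. lia.
  - split.
    + simpl. rewrite Hth0, Hth1. rewrite (Hth a), (Hth e). reflexivity.
      all: intros x Hx; apply HN; simpl; rewrite ?app_nil_r, !in_app_iff; auto.
    + intros u Eu. simpl in Eu. injection Eu as Ea Ee. exists u. intros x.
      destruct (Nat.eq_dec x (N+0)). subst x. rewrite Hth0; auto.
      destruct (Nat.eq_dec x (N+1)). subst x. rewrite Hth1; auto.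
      unfold th; rewrite !upd_neq by auto. reflexivity.
Qed.

Lemma step_cl3 P B R N : (forall x, In x (flat_map vars (solveT B :: R)) -> x < N) ->
  ld_step (M0 ++ ce P) (solveT B :: R) (clauseT B (Var (N+1)) :: solveT (Var (N+1)) :: R).
Proof.
  intros HN.
  set (c' := mkClause (solveT (Var (N+0))) [clauseT (Var (N+0)) (Var (N+1)); solveT (Var (N+1))]).
  set (th := upd Var (N+0) B).
  assert (Hth : forall t, (forall x, In x (vars t) -> x < N) -> subst th t = t).
  { intros t Ht. rewrite <- (subst_var t) at 2. apply subst_ext. intros x Hx. specialize (Ht x Hx).
    unfold th. rewrite !upd_neq by lia. auto. }
  assert (Hth0 : th (N+0) = B) by (unfold th; apply upd_eq).
  assert (Hth1 : th (N+1) = Var (N+1)) by (unfold th; rewrite upd_neq by lia; auto).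
  assert (E : clauseT B (Var (N+1)) :: solveT (Var (N+1)) :: R = map (subst th) (body c' ++ R)).
  { simpl. rewrite Hth0, Hth1. f_equal. f_equal. rewrite <- (map_subst_var R) at 1.
    apply map_subst_ext. intros x Hx. assert (x < N) by (apply HN; simpl; rewrite !in_app_iff; auto).
    unfold th; rewrite !upd_neq by lia; auto. }
  rewrite E. apply (ld_step_intro (M0 ++ ce P) _ _ cl3 c' th (in3 P)).
  - exists (fun x => Var (N + x)), (fun x => Var (x - N)). split; [reflexivity|].
    unfold subst_cl, c', cl3; simpl. replace (N+0-N) with 0 by lia. replace (N+1-N) with 1 by lia. reflexivity.
  - intros x Hx Hx'. apply HN in Hx'. unfold c', cl_vars in Hx; simpl in Hx. lia.
  - split.
    + simpl. rewrite Hth0. f_equal; f_equal. apply Hth.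
      intros x Hx; apply HN; simpl; rewrite !app_nil_r, !in_app_iff; auto.
    + intros u Eu. simpl in Eu. injection Eu as Ea. exists u. intros x.
      destruct (Nat.eq_dec x (N+0)). subst x. rewrite Hth0; auto.
      unfold th; rewrite !upd_neq by auto. reflexivity.
Qed.

Definition ceC (c : clause) := mkClause (clauseT (Defs.head c) (enc_body (body c))) [].
Lemma in_ce P c : In c P -> In (ceC c) (M0 ++ ce P).
Proof. intros H; apply in_or_app; right; unfold ce. apply in_map_iff. exists c; auto. Qed.

Lemma step_ce P c c' th B R Y : In c P -> cl_variant c c' ->
  (forall x, In x (cl_vars c') -> ~ In x (vars B ++ flat_map vars R)) ->
  is_mgu th B (Defs.head c') -> ~ In Y (vars B) -> ~ In Y (flat_map vars R) -> ~ In Y (cl_vars c') ->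
  ld_step (M0 ++ ce P) (clauseT B (Var Y) :: solveT (Var Y) :: R)
             (solvEnc (map (subst th) (body c')) :: map (subst th) R).
Proof.
  intros Hin [s [r [E1 E2]]] Hfr [Hu Hg] HYB HYR HYc.
  set (th2 := upd th Y (subst th (enc_body (body c')))).
  assert (Hvc : forall x, In x (vars (enc_body (body c'))) -> In x (cl_vars c')).
  { intros x Hx; apply vars_enc in Hx; unfold cl_vars; apply in_or_app; auto. }
  assert (Hvh : forall x, In x (vars (Defs.head c')) -> In x (cl_vars c')).
  { intros x Hx; unfold cl_vars; apply in_or_app; auto. }
  assert (E : solvEnc (map (subst th) (body c')) :: map (subst th) R =
              map (subst th2) (body (ceC c') ++ solveT (Var Y) :: R)).
  { simpl. unfold th2. rewrite upd_eq. rewrite map_subst_upd_notin by auto.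
    unfold solvEnc. rewrite enc_subst. auto. }
  rewrite E. apply (ld_step_intro (M0 ++ ce P) _ _ (ceC c) (ceC c') th2 (in_ce P c Hin)).
  - exists s, r. subst c'. destruct c as [h b]; unfold ceC, subst_cl; simpl. rewrite enc_subst.
    split; auto. injection E2 as E3 E4. rewrite enc_subst, E3, E4. reflexivity.
  - intros x Hx. unfold ceC, cl_vars in Hx; simpl in Hx. rewrite ?app_nil_r in Hx.
    assert (Hx' : In x (cl_vars c')) by (apply in_app_or in Hx as [Hx|Hx]; auto).
    specialize (Hfr x Hx'). intros Hy. apply Hfr. assert (x <> Y) by (intro; subst; contradiction).
    simpl in Hy. rewrite ?app_nil_r in Hy. rewrite !in_app_iff in *. simpl in Hy. intuition; try congruence; exfalso; auto.
  - split.
    + unfold ceC; simpl. unfold th2. rewrite upd_eq. rewrite !subst_upd_notin; auto.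
      rewrite Hu; auto.
    + intros u Eu. unfold ceC in Eu; simpl in Eu. injection Eu as EuB EuE.
      destruct (Hg u EuB) as [eta Heta]. exists eta. intros x.
      destruct (Nat.eq_dec x Y).
      * subst x. unfold th2. rewrite upd_eq. rewrite EuE. rewrite subst_comp. apply subst_ext.
        intros; apply Heta.
      * unfold th2; rewrite upd_neq; auto.
Qed.


Lemma reach_step' P X Y Z : ld_reach P X Y -> ld_step P Y Z -> ld_reach P X Z.
Proof. apply reach_app. Qed.

Lemma normalize P Ls B G0 X : concat Ls = B :: G0 ->
  ld_reach (M0 ++ ce P) X (map solvEnc Ls) ->
  exists Ls', concat Ls' = G0 /\ ld_reach (M0 ++ ce P) X (solveT B :: map solvEnc Ls').
Proof.
  revert B G0. induction Ls as [|L Ls IH]; intros B G0 E HR; simpl in E. discriminate.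
  destruct L as [|b [|b' bs]].
  - simpl in E. apply (IH B G0 E). eapply reach_step'; [exact HR|]. apply step_true.
  - simpl in E. injection E as <- <-. exists Ls; split; auto.
  - simpl in E. injection E as <- E. exists ((b' :: bs) :: Ls). split; auto.
    eapply reach_step'; eauto. apply step_conj.
Qed.

Lemma part1_step P X G G' : ld_step P G G' ->
  (exists Ls, concat Ls = G /\ ld_reach (M0 ++ ce P) X (map solvEnc Ls)) ->
  exists Ls, concat Ls = G' /\ ld_reach (M0 ++ ce P) X (map solvEnc Ls).
Proof.
  intros Hs [Ls [E HR]]. destruct Hs as [B G0 c c' th Hin Hv Hfr Hmgu].
  destruct (normalize P Ls B G0 X E HR) as [Ls0 [E0 HR0]].
  set (R := map solvEnc Ls0) in *.
  set (N := S (maxl (flat_map vars (solveT B :: R) ++ cl_vars c'))).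
  assert (HN : forall x, In x (flat_map vars (solveT B :: R) ++ cl_vars c') -> x < N)
    by (intros; apply in_le_max in H; unfold N; lia).
  clearbody N.
  assert (HRv : forall x, In x (flat_map vars R) <-> In x (flat_map vars G0)).
  { intros x; unfold R; rewrite vars_solvEnc, E0; tauto. }
  exists (map (subst th) (body c') :: map (map (subst th)) Ls0). split.
  - simpl. rewrite concat_map_map, E0, map_app. auto.
  - eapply reach_step'. eapply reach_step'. exact HR0.
    + apply (step_cl3 P B R N). intros; apply HN, in_or_app; auto.
    + simpl. rewrite <- map_solvEnc. fold R. apply (step_ce P c c' th B R (N+1)); auto.
      * intros x Hx Hx'. apply (Hfr x Hx). simpl. rewrite in_app_iff in *. rewrite <- HRv. auto.
      * intros H. assert (N + 1 < N); [|lia]. apply HN. simpl. rewrite !in_app_iff; auto.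
      * intros H. assert (N + 1 < N); [|lia]. apply HN. simpl. rewrite !in_app_iff; auto.
      * intros H. assert (N + 1 < N); [|lia]. apply HN. rewrite !in_app_iff; auto.
Qed.

Lemma part1_reach P Q G : ld_reach P [Q] G ->
  exists Ls, concat Ls = G /\ ld_reach (M0 ++ ce P) [solveT Q] (map solvEnc Ls).
Proof.
  intros H.
  assert (Hb : exists Ls, concat Ls = [Q] /\ ld_reach (M0 ++ ce P) [solveT Q] (map solvEnc Ls)).
  { exists [[Q]]. split; auto. constructor. }
  revert Hb. unfold ld_reach in H. induction H; auto.
  intros Hb. apply IHclos_refl_trans_1n. eapply part1_step; eauto.
Qed.

Lemma part1 P Q A : Call P Q A ->
  exists A' : term, Call (M0 ++ ce P) (solveT Q) (solveT A') /\ variant A A'.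
Proof.
  intros [A' [G [HR HV]]]. destruct (part1_reach P Q _ HR) as [Ls [E HR']].
  destruct (normalize P Ls A' G _ E HR') as [Ls' [_ HR'']].
  exists A'. split; auto. exists (solveT A'), (map solvEnc Ls'). split; auto.
  exists Var, Var. rewrite subst_var; auto.
Qed.


Definition good (t : term) : Prop :=
  match t with Var _ => False | Fn f l => reservedb f (length l) = false end.
Lemma good_subst s t : good t -> good (subst s t).
Proof. destruct t; simpl; intros H; [contradiction|]. rewrite length_map; auto. Qed.
Lemma BE_good t : in_BE t -> good t.
Proof. intros [H1 H2]; destruct t; simpl in *; auto. apply andb_prop in H2 as [H2 _].
  destruct (reservedb f (length args)); auto. Qed.
Lemma Forall_good_map s l : Forall good l -> Forall good (map (subst s) l).
Proof. intros H; apply Forall_map; eapply Forall_impl; [|exact H]; intros; apply good_subst; auto. Qed.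

Lemma in_MP P c : In c (M0 ++ ce P) -> c = cl1 \/ c = cl2 \/ c = cl3 \/ exists c0, In c0 P /\ c = ceC c0.
Proof.
  intros H; apply in_app_or in H as [H|H].
  - simpl in H. destruct H as [<-|[<-|[<-|[]]]]; auto.
  - unfold ce in H; apply in_map_iff in H as [c0 [<- H]]. right; right; right; exists c0; auto.
Qed.

Lemma var_cl1 c' : cl_variant cl1 c' -> c' = cl1.
Proof. intros [s [r [E1 _]]]; subst; reflexivity. Qed.

Lemma var_cl2 c' : cl_variant cl2 c' -> exists a b, a <> b /\
  c' = mkClause (solveT (conjT (Var a) (Var b))) [solveT (Var a); solveT (Var b)].
Proof.
  intros [s [r [E1 E2]]]; subst c'. unfold cl2, subst_cl in E2; simpl in E2.
  destruct (s 0) eqn:H0; simpl in E2; try discriminate.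
  destruct (s 1) eqn:H1; simpl in E2; try discriminate.
  exists x, x0. split.
  - intro; subst. injection E2; congruence.
  - unfold subst_cl, cl2; simpl; rewrite H0, H1; reflexivity.
Qed.

Lemma var_cl3 c' : cl_variant cl3 c' -> exists a b, a <> b /\
  c' = mkClause (solveT (Var a)) [clauseT (Var a) (Var b); solveT (Var b)].
Proof.
  intros [s [r [E1 E2]]]; subst c'. unfold cl3, subst_cl in E2; simpl in E2.
  destruct (s 0) eqn:H0; simpl in E2; try discriminate.
  destruct (s 1) eqn:H1; simpl in E2; try discriminate.
  exists x, x0. split.
  - intro; subst. injection E2; congruence.
  - unfold subst_cl, cl3; simpl; rewrite H0, H1; reflexivity.
Qed.

Lemma ceC_subst s c : subst_cl s (ceC c) = ceC (subst_cl s c).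
Proof. destruct c; unfold ceC, subst_cl; simpl. rewrite enc_subst; auto. Qed.

Lemma var_ce c0 c' : cl_variant (ceC c0) c' ->
  exists s, c' = ceC (subst_cl s c0) /\ cl_variant c0 (subst_cl s c0).
Proof.
  intros [s [r [E1 E2]]]. subst c'. exists s. rewrite ceC_subst. split; auto.
  exists s, r. split; auto. rewrite !ceC_subst, subst_cl_comp in E2.
  rewrite subst_cl_comp. destruct c0 as [h b]. unfold ceC, subst_cl in *; simpl in *.
  injection E2 as E3 E4. rewrite E3. f_equal.
  rewrite <- (map_subst_var b) at 2. apply map_subst_ext. intros x Hx.
  rewrite <- enc_subst in E4. eapply subst_fix in E4; eauto. apply vars_enc; auto.
Qed.

Lemma lvar_mgu sg t1 t2 u G : is_mgu sg t1 t2 -> subst u t1 = subst u t2 ->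
  (forall x, In x (flat_map vars G) -> u x = Var x) -> lvar G (map (subst sg) G).
Proof.
  intros [_ Hg] Hu Hx. destruct (Hg u Hu) as [eta Heta].
  exists sg, eta. split; auto. rewrite map_subst_comp. rewrite <- (map_subst_var G) at 2.
  apply map_subst_ext. intros x H. rewrite <- Heta. auto.
Qed.

Definition head_sym (t : term) : option (sym * nat) :=
  match t with Var _ => None | Fn f l => Some (f, length l) end.
Lemma head_sym_subst s t : good t -> head_sym (subst s t) = head_sym t.
Proof. destruct t; simpl; intros H; [contradiction|]. rewrite length_map; auto. Qed.


Lemma step_inv P M M' : ld_step P M M' -> exists A G c c' th, M = A :: G /\
  M' = map (subst th) (body c' ++ G) /\ In c P /\ cl_variant c c' /\
  (forall x, In x (cl_vars c') -> ~ In x (flat_map vars (A :: G))) /\ is_mgu th A (Defs.head c').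
Proof. intros [A G c c' th H1 H2 H3 H4]; exists A, G, c, c', th; split; [reflexivity|split; [reflexivity|split; [auto|split; [auto|split; auto]]]]. Qed.

Lemma good_eq s t f l : good t -> subst s t = Fn f l -> reservedb f (length l) = false.
Proof. intros H E. apply (good_subst s) in H. rewrite E in H. exact H. Qed.

Lemma img_fresh sg eta y b x : subst eta (sg b) = Var b -> sg b = Var y ->
  subst eta (sg x) = Var x -> In y (vars (sg x)) -> b = x.
Proof.
  intros H1 H2 H3 H4. assert (In b (vars (subst eta (sg x)))).
  { eapply vars_subst_in2; eauto. rewrite H2 in H1. simpl in H1. rewrite H1. simpl; auto. }
  rewrite H3 in H. simpl in H. destruct H as [->|[]]; auto.
Qed.

Definition bad (t : term) : Prop :=
  match t with Var _ => False | Fn f l => reservedb f (length l) = true end.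

Definition InvA P Q M := exists Ls, M = map solvEnc Ls /\ Forall good (concat Ls) /\ PR P Q (concat Ls).
Definition InvB P Q M := exists B Y Ls,
  M = clauseT B (Var Y) :: solveT (Var Y) :: map solvEnc Ls /\ ~ In Y (vars B) /\
  ~ In Y (flat_map vars (concat Ls)) /\ good B /\ Forall good (concat Ls) /\ PR P Q (B :: concat Ls).
Definition InvC (M : list term) := exists t z R, M = Fn ClauseS [t; z] :: R /\ bad t.
Definition Inv P Q M := InvA P Q M \/ InvB P Q M \/ InvC M.

Lemma stepA P Q M M' : InvA P Q M -> ld_step (M0 ++ ce P) M M' -> Inv P Q M'.
Proof.
  intros [Ls [-> [Hg HPR]]] Hs.
  destruct (step_inv _ _ _ Hs) as [A [G [c [c' [sg [HM [-> [Hin [Hv [Hfr Hmgu]]]]]]]]]].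
  destruct Ls as [|L1 Ls']; [discriminate|]. simpl in HM. injection HM as <- <-.
  assert (HvA : forall x, In x (flat_map vars (concat (L1 :: Ls'))) -> In x (flat_map vars (solvEnc L1 :: map solvEnc Ls'))).
  { intros x Hx. change (solvEnc L1 :: map solvEnc Ls') with (map solvEnc (L1 :: Ls')). apply vars_solvEnc; auto. }
  destruct (in_MP P c Hin) as [->|[->|[->|[c0 [Hc0 ->]]]]].
  - apply var_cl1 in Hv. subst c'. destruct Hmgu as [Hu Hgen].
    destruct L1 as [|b0 [|b1 bs]].
    + left. exists (map (map (subst sg)) Ls'). split; [|split].
      * simpl. apply map_solvEnc.
      * rewrite concat_map_map. apply Forall_good_map. auto.
      * rewrite concat_map_map. eapply PR_var; [exact HPR|]. simpl.
        apply (lvar_mgu sg (solvEnc []) (solveT trueT) Var); [split; auto| reflexivity | reflexivity].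
    + exfalso. simpl in Hu. injection Hu as Hu. simpl in Hg. inversion Hg; subst.
      pose proof (good_eq _ _ _ _ H1 Hu). discriminate.
    + simpl in Hu. discriminate.
  - apply var_cl2 in Hv as [a [b [Hab ->]]]. pose proof Hmgu as Hm. destruct Hmgu as [Hu Hgen].
    pose proof (Hfr a ltac:(simpl; auto)) as Hfa. pose proof (Hfr b ltac:(simpl; auto)) as Hfb.
    destruct L1 as [|b0 [|b1 bs]].
    + simpl in Hu. discriminate.
    + exfalso. simpl in Hu. injection Hu as Hu. simpl in Hg. inversion Hg; subst.
      pose proof (good_eq _ _ _ _ H1 Hu). discriminate.
    + change (solvEnc (b0 :: b1 :: bs)) with (solveT (conjT b0 (enc_body (b1 :: bs)))) in *.
      injection Hu as Hu1 Hu2. assert (Hu2' : subst sg (enc_body (b1 :: bs)) = sg b) by exact Hu2.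
      clear Hu2. rename Hu2' into Hu2.
      assert (Hcc : concat ([subst sg b0] :: map (subst sg) (b1 :: bs) :: map (map (subst sg)) Ls') =
                    map (subst sg) (concat ((b0 :: b1 :: bs) :: Ls'))).
      { simpl. rewrite concat_map_map, map_app. reflexivity. }
      left. exists ([subst sg b0] :: map (subst sg) (b1 :: bs) :: map (map (subst sg)) Ls').
      split; [|split].
      * rewrite map_app, map_solvEnc. simpl body. cbn [map app subst].
        change (subst sg (solveT (Var a))) with (solveT (sg a)).
        change (subst sg (solveT (Var b))) with (solveT (sg b)).
        rewrite <- Hu1, <- Hu2, enc_subst. reflexivity.
      * rewrite Hcc. apply Forall_good_map; auto.
      * rewrite Hcc. eapply PR_var; [exact HPR|].
        set (u := upd (upd Var b (enc_body (b1 :: bs))) a b0).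
        assert (Hux : forall x, In x (flat_map vars (solveT (conjT b0 (enc_body (b1 :: bs))) :: map solvEnc Ls')) -> u x = Var x).
        { intros x Hx. unfold u. rewrite !upd_neq; auto; intros ->; auto. }
        apply (lvar_mgu sg _ _ u _ Hm).
        -- rewrite (subst_ext u Var), subst_var.
           ++ simpl. unfold u. rewrite upd_eq, upd_neq, upd_eq; auto.
           ++ intros x Hx. apply Hux. change (In x (vars (solveT (conjT b0 (enc_body (b1 :: bs)))) ++ flat_map vars (map solvEnc Ls'))). apply in_or_app. left. exact Hx.
        -- intros x Hx. apply Hux. apply HvA. exact Hx.
  - apply var_cl3 in Hv as [a [b [Hab ->]]]. pose proof Hmgu as Hm. destruct Hmgu as [Hu Hgen].
    pose proof (Hfr a ltac:(simpl; auto)) as Hfa. pose proof (Hfr b ltac:(simpl; auto)) as Hfb.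
    destruct L1 as [|b0 [|b1 bs]].
    + right; right. exists (sg a), (sg b), (map (subst sg) (solveT (Var b) :: map solvEnc Ls')).
      split; [reflexivity|]. injection Hu as Hu. rewrite <- Hu. reflexivity.
    + injection Hu as Hu.
      set (u := upd Var a b0).
      assert (Hux : forall x, In x (flat_map vars (solvEnc [b0] :: map solvEnc Ls')) -> u x = Var x).
      { intros x Hx. unfold u. rewrite !upd_neq; auto; intros ->; auto. }
      assert (Hux' : forall x, In x (flat_map vars (concat ([b0] :: Ls'))) -> u x = Var x).
      { intros x Hx. apply Hux, HvA, Hx. }
      assert (Hunif : subst u (solvEnc [b0]) = subst u (Defs.head (mkClause (solveT (Var a)) [clauseT (Var a) (Var b); solveT (Var b)]))).
      { rewrite (subst_ext u Var), subst_var.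
        - simpl. unfold u. rewrite upd_eq. reflexivity.
        - intros x Hx. apply Hux. apply in_or_app. left. exact Hx. }
      destruct (Hgen u Hunif) as [eta Heta].
      assert (Hb : subst eta (sg b) = Var b) by (rewrite <- Heta; unfold u; rewrite upd_neq; auto).
      destruct (sg b) as [y|f l] eqn:Hsb; [|discriminate].
      assert (Hfx : forall x, In x (flat_map vars (concat ([b0] :: Ls'))) -> In y (vars (sg x)) -> False).
      { intros x Hx Hy. assert (b = x).
        { apply (img_fresh sg eta y b x); [rewrite Hsb; exact Hb | exact Hsb | rewrite <- Heta; apply Hux'; exact Hx | exact Hy]. }
        subst x. apply Hfb. apply HvA. exact Hx. }
      right; left. exists (sg a), y, (map (map (subst sg)) Ls').
      split; [|split; [|split; [|split; [|split]]]].
      * rewrite map_app, map_solvEnc. simpl body. cbn [map app].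
        change (subst sg (clauseT (Var a) (Var b))) with (clauseT (sg a) (sg b)).
        change (subst sg (solveT (Var b))) with (solveT (sg b)). rewrite Hsb. reflexivity.
      * rewrite <- Hu. intros Hy. destruct (vars_subst_in _ _ _ Hy) as [x [Hx Hy']].
        apply (Hfx x); auto. simpl. apply in_or_app; auto.
      * rewrite concat_map_map. intros Hy. destruct (fm_vars_subst_in _ _ _ Hy) as [x [Hx Hy']].
        apply (Hfx x); auto. simpl. apply in_or_app; auto.
      * rewrite <- Hu. apply good_subst. simpl in Hg. inversion Hg; auto.
      * rewrite concat_map_map. apply Forall_good_map. simpl in Hg. inversion Hg; auto.
      * rewrite <- Hu, concat_map_map. change (subst sg b0 :: map (subst sg) (concat Ls'))
          with (map (subst sg) (concat ([b0] :: Ls'))).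
        eapply PR_var; [exact HPR|]. apply (lvar_mgu sg _ _ u _ Hm Hunif Hux').
    + right; right. exists (sg a), (sg b), (map (subst sg) (solveT (Var b) :: map solvEnc Ls')).
      split; [reflexivity|]. injection Hu as Hu. rewrite <- Hu. reflexivity.
  - apply var_ce in Hv as [s [-> _]]. destruct Hmgu as [Hu _].
    destruct L1 as [|b0 [|b1 bs]]; discriminate.
Qed.


Lemma cl_vars_ceC c x : In x (cl_vars c) -> In x (cl_vars (ceC c)).
Proof.
  unfold cl_vars, ceC; simpl. rewrite !in_app_iff, vars_enc. intros [H|H]; auto.
Qed.

Lemma dp_good P c : definite_program P -> In c P -> good (Defs.head c) /\ Forall good (body c).
Proof.
  intros HP Hc. destruct (HP c Hc) as [H1 H2]. split. apply BE_good; auto.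
  apply Forall_forall. intros; apply BE_good; auto.
Qed.

Lemma stepB P Q M M' : definite_program P -> InvB P Q M -> ld_step (M0 ++ ce P) M M' -> Inv P Q M'.
Proof.
  intros HP [B [Y [Ls [-> [HYB [HYL [HgB [Hg HPR]]]]]]]] Hs.
  destruct (step_inv _ _ _ Hs) as [A [G [c [c' [sg [HM [-> [Hin [Hv [Hfr Hmgu]]]]]]]]]].
  injection HM as <- <-.
  destruct (in_MP P c Hin) as [->|[->|[->|[c0 [Hc0 ->]]]]].
  - apply var_cl1 in Hv. subst c'. destruct Hmgu as [Hu _]. discriminate.
  - apply var_cl2 in Hv as [a [b [_ ->]]]. destruct Hmgu as [Hu _]. discriminate.
  - apply var_cl3 in Hv as [a [b [_ ->]]]. destruct Hmgu as [Hu _]. discriminate.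
  - apply var_ce in Hv as [s [-> Hv1]]. set (c1 := subst_cl s c0) in *. clearbody c1.
    destruct (dp_good P c0 HP Hc0) as [Hgh Hgb].
    assert (Hgb1 : Forall good (body c1)).
    { destruct Hv1 as [s1 [r1 [<- _]]]. unfold subst_cl; simpl. apply Forall_good_map; auto. }
    destruct Hmgu as [Hu Hgen].
    assert (Hu1 : subst sg B = subst sg (Defs.head c1)) by (injection Hu as H1 H2; exact H1).
    assert (Hu2 : sg Y = subst sg (enc_body (body c1))) by (injection Hu as H1 H2; exact H2).
    assert (HvM : forall x, In x (flat_map vars (clauseT B (Var Y) :: solveT (Var Y) :: map solvEnc Ls)) <->
                  In x (vars B) \/ x = Y \/ In x (flat_map vars (concat Ls))).
    { intros x. cbn [flat_map]. rewrite !in_app_iff, vars_solvEnc. simpl. rewrite ?app_nil_r, ?in_app_iff. simpl. intuition. }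
    assert (HfrP : forall x, In x (cl_vars c1) -> ~ In x (flat_map vars (B :: concat Ls))).
    { intros x Hx Hx'. apply (Hfr x (cl_vars_ceC _ _ Hx)). apply HvM. simpl in Hx'.
      rewrite in_app_iff in Hx'. tauto. }
    assert (HY1 : ~ In Y (cl_vars c1)).
    { intros Hx. apply (Hfr Y (cl_vars_ceC _ _ Hx)). apply HvM. auto. }
    set (N := S (maxl (vars B ++ cl_vars c1 ++ [Y] ++ flat_map vars (concat Ls)))).
    assert (HN : forall x, In x (vars B ++ cl_vars c1 ++ [Y] ++ flat_map vars (concat Ls)) -> x < N)
      by (intros; apply in_le_max in H; unfold N; lia).
    clearbody N.
    assert (HYN : Y < N) by (apply HN; rewrite !in_app_iff; simpl; auto).
    set (g := fun x => if x =? Y then N else if x <? N then x else S x).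
    set (ginv := fun z => if z =? N then Y else if z <? N then z else pred z).
    assert (Hgi : forall x, ginv (g x) = x).
    { intros x. unfold g, ginv. destruct (Nat.eqb_spec x Y).
      - rewrite Nat.eqb_refl; auto.
      - destruct (Nat.ltb_spec x N).
        + destruct (Nat.eqb_spec x N); [lia|]. destruct (Nat.ltb_spec x N); lia.
        + destruct (Nat.eqb_spec (S x) N); [lia|]. destruct (Nat.ltb_spec (S x) N); lia. }
    assert (HgY : forall x, g x <> Y).
    { intros x. unfold g. destruct (Nat.eqb_spec x Y); [lia|]. destruct (Nat.ltb_spec x N); lia. }
    assert (Hgid : forall x, x < N -> x <> Y -> g x = x).
    { intros x H1 H2. unfold g. destruct (Nat.eqb_spec x Y); [lia|]. destruct (Nat.ltb_spec x N); lia. }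
    assert (Hgiid : forall x, x < N -> x <> Y -> ginv x = x).
    { intros x H1 H2. unfold ginv. destruct (Nat.eqb_spec x N); [lia|]. destruct (Nat.ltb_spec x N); lia. }
    set (tau := fun x => sg (g x)).
    assert (Htau : forall t, (forall x, In x (vars t) -> x < N /\ x <> Y) -> subst tau t = subst sg t).
    { intros t Ht. apply subst_ext. intros x Hx. destruct (Ht x Hx). unfold tau. rewrite Hgid; auto. }
    assert (HvB : forall x, In x (vars B) -> x < N /\ x <> Y).
    { intros x Hx. split. apply HN; rewrite !in_app_iff; auto. intros ->; contradiction. }
    assert (Hvc : forall x, In x (cl_vars c1) -> x < N /\ x <> Y).
    { intros x Hx. split. apply HN; rewrite !in_app_iff; auto. intros ->; contradiction. }
    assert (Hvh : forall x, In x (vars (Defs.head c1)) -> x < N /\ x <> Y).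
    { intros x Hx. apply Hvc. unfold cl_vars; apply in_or_app; auto. }
    assert (Hve : forall x, In x (vars (enc_body (body c1))) -> x < N /\ x <> Y).
    { intros x Hx. apply Hvc. unfold cl_vars; apply in_or_app; right; apply vars_enc; auto. }
    assert (HvL : forall x, In x (flat_map vars (concat Ls)) -> x < N /\ x <> Y).
    { intros x Hx. split. apply HN; rewrite !in_app_iff; simpl; auto. intros ->; contradiction. }
    assert (Hmgu : is_mgu tau B (Defs.head c1)).
    { split.
      - rewrite !Htau; auto.
      - intros u Eu.
        set (u' := fun z => if z =? Y then subst u (enc_body (body c1)) else u (ginv z)).
        assert (Hu' : forall t, (forall x, In x (vars t) -> x < N /\ x <> Y) -> subst u' t = subst u t).
        { intros t Ht. apply subst_ext. intros x Hx. destruct (Ht x Hx). unfold u'.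
          destruct (Nat.eqb_spec x Y); [contradiction|]. rewrite Hgiid; auto. }
        assert (Eu' : subst u' (clauseT B (Var Y)) = subst u' (Defs.head (ceC c1))).
        { change (Defs.head (ceC c1)) with (clauseT (Defs.head c1) (enc_body (body c1))).
          unfold clauseT; simpl. rewrite !Hu' by auto. rewrite Eu. unfold u'. rewrite Nat.eqb_refl. reflexivity. }
        destruct (Hgen u' Eu') as [eta Heta]. exists eta. intros x.
        unfold tau. rewrite <- Heta. unfold u'. destruct (Nat.eqb_spec (g x) Y).
        + exfalso; eapply HgY; eauto.
        + rewrite Hgi. reflexivity. }
    assert (Hstep : ld_step P (B :: concat Ls) (map (subst tau) (body c1 ++ concat Ls))).
    { apply ld_step_intro with c0; auto. }
    left. exists (map (subst sg) (body c1) :: map (map (subst sg)) Ls). split; [|split].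
    + change (body (ceC c1)) with (@nil term). cbn [app]. rewrite map_cons, map_solvEnc.
      change (subst sg (solveT (Var Y))) with (solveT (sg Y)). rewrite Hu2, enc_subst. reflexivity.
    + simpl. rewrite concat_map_map. apply Forall_app; split; apply Forall_good_map; auto.
    + replace (concat (map (subst sg) (body c1) :: map (map (subst sg)) Ls))
        with (map (subst tau) (body c1 ++ concat Ls)).
      * eapply PR_step; eauto.
      * simpl. rewrite concat_map_map, map_app. f_equal; apply map_ext_in; intros t Ht; apply Htau.
        -- intros x Hx. apply Hvc. unfold cl_vars. apply in_or_app; right. apply in_flat_map; eauto.
        -- intros x Hx. apply HvL. apply in_flat_map; eauto.
Qed.

Lemma stepC P M M' : definite_program P -> InvC M -> ld_step (M0 ++ ce P) M M' -> False.
Proof.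
  intros HP [t [z [R [-> Hb]]]] Hs.
  destruct (step_inv _ _ _ Hs) as [A [G [c [c' [sg [HM [_ [Hin [Hv [Hfr Hmgu]]]]]]]]]].
  injection HM as <- <-.
  destruct (in_MP P c Hin) as [->|[->|[->|[c0 [Hc0 ->]]]]].
  - apply var_cl1 in Hv. subst c'. destruct Hmgu as [Hu _]. discriminate.
  - apply var_cl2 in Hv as [a [b [_ ->]]]. destruct Hmgu as [Hu _]. discriminate.
  - apply var_cl3 in Hv as [a [b [_ ->]]]. destruct Hmgu as [Hu _]. discriminate.
  - apply var_ce in Hv as [s [-> _]]. destruct (dp_good P c0 HP Hc0) as [Hgh _].
    destruct Hmgu as [Hu _].
    assert (Hu1 : subst sg t = subst sg (subst s (Defs.head c0))) by (injection Hu as H1 H2; exact H1).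
    destruct t as [|f l]; [contradiction|]. simpl in Hb.
    assert (Hg2 := good_subst sg _ (good_subst s _ Hgh)). rewrite <- Hu1 in Hg2. simpl in Hg2.
    rewrite length_map in Hg2. congruence.
Qed.

Lemma inv_reach P Q M M' : definite_program P -> ld_reach (M0 ++ ce P) M M' -> Inv P Q M -> Inv P Q M'.
Proof.
  intros HP H. unfold ld_reach in H. induction H; auto. intros HI. apply IHclos_refl_trans_1n.
  destruct HI as [HI|[HI|HI]].
  - eapply stepA; eauto.
  - eapply stepB; eauto.
  - exfalso; eapply stepC; eauto.
Qed.

Lemma part2 P Q A : definite_program P -> in_BE Q ->
  Call (M0 ++ ce P) (solveT Q) (solveT A) -> in_BE A ->
  exists A' : term, Call P Q A' /\ variant A A'.
Proof.
  intros HP HQ [A'' [G [HR [s [r [E1 E2]]]]]] HA.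
  assert (HI : Inv P Q (A'' :: G)).
  { eapply inv_reach; eauto. left. exists [[Q]]. split; [reflexivity|]. split.
    - simpl. constructor; auto. apply BE_good; auto.
    - exists [Q]. split. constructor. apply lvar_refl. }
  apply BE_good in HA.
  destruct HI as [[Ls [HM [_ HPR]]]|[[B [Y [Ls [HM _]]]]|[t [z [R [HM _]]]]]].
  - destruct Ls as [|L1 Ls']; [discriminate|]. injection HM as HM1 HM2. subst A''.
    assert (He : subst s A = enc_body L1) by (unfold solvEnc, solveT in HM1; simpl in HM1; injection HM1; auto).
    destruct L1 as [|b0 [|b1 bs]].
    + pose proof (good_eq _ _ _ _ HA He). discriminate.
    + simpl in He. destruct HPR as [G0 [HR0 [s' [r' [E3 E4]]]]].
      simpl in E3. subst G0. simpl in E4. injection E4 as E4 _.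
      exists (subst s' b0). split.
      * exists (subst s' b0), (map (subst s') (concat Ls')). split; auto.
        exists Var, Var. rewrite subst_var; auto.
      * exists (fun x => subst s' (s x)), (fun x => subst r (r' x)). split.
        -- rewrite <- subst_comp, He; auto.
        -- rewrite <- subst_comp, E4. simpl in E2. injection E2 as E2. rewrite <- He. auto.
    + simpl in He. pose proof (good_eq _ _ _ _ HA He). discriminate.
  - subst A''. discriminate.
  - subst A''. discriminate.
Qed.


Theorem mainTheorem1 :
  forall (P : program) (Q : term),
    definite_program P ->
    in_BE Q ->
    (forall A : term, Call P Q A ->
       exists A' : term, Call (M0 ++ ce P) (solveT Q) (solveT A') /\ variant A A') /\
    (forall A : term, Call (M0 ++ ce P) (solveT Q) (solveT A) -> in_BE A ->
       exists A' : term, Call P Q A' /\ variant A A').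
Proof.
  intros P Q HP HQ. split.
  - intros A H. apply part1; auto.
  - intros A H HA. eapply part2; eauto.
Qed.
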